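(* Let $l_0,l_1,l_2$ be pairwise coprime with $1\le l_0\le l_1\le l_2$, $G=x_0^{l_1l_2}+x_1^{l_0l_2}+x_2^{l_0l_1}$, and let $\lambda,\mu,\gamma\in\mathbb{C}$ be $\mathbb{Z}$-linearly independent. Let $\mathcal{F}_0$ be the foliation on $\mathbb{P}(l_0,l_1,l_2)$ (of normal degree $l_0l_1l_2+l_0+l_1+l_2$) induced by $$\beta=x_0x_1x_2G\left(\lambda l_1l_2\frac{dx_0}{x_0}+\mu l_0l_2\frac{dx_1}{x_1}+\gamma l_0l_1\frac{dx_2}{x_2}-(\lambda+\mu+\gamma)\frac{dG}{G}\right).$$ Then there are singularities of $\mathcal{F}_0$ in $\mathbb{P}(l_0,l_1,l_2)\setminus\{x_0x_1x_2=0\}$ through which no $\mathcal{F}_0$-invariant algebraic curve passes.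
   Context: $\mathbb{P}(l_0,l_1,l_2)$ is the quotient of $\mathbb{C}^3\setminus\{0\}$ by $t\cdot(x_0,x_1,x_2)=(t^{l_0}x_0,t^{l_1}x_1,t^{l_2}x_2)$. A foliation is the class of a 1-form $\omega=\sum A_idx_i$ with $A_i$ quasi-homogeneous of degree $d-l_i$ and $\sum l_ix_iA_i=0$; its singularities are the points where $\omega$ vanishes. An algebraic curve is the zero set of a nonconstant quasi-homogeneous polynomial $F$; it is invariant if $\omega\wedge dF=F\Theta$ for some polynomial 2-form $\Theta$. *)

(* Defs.v *)
From HB Require Import structures.
From mathcomp Require Import all_boot all_order all_algebra.
From mathcomp Require Import reals complex.
From mathcomp Require Import mpoly.
Set Implicit Arguments. Unset Strict Implicit. Unset Printing Implicit Defensive.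
Import Order.TTheory GRing.Theory Num.Theory.
Local Open Scope ring_scope.

Section Foliation.
Variable K : fieldType.
Notation P := {mpoly K[3]}.

Definition wt (l0 l1 l2 : nat) (i : 'I_3) : nat :=
  if val i == 0%N then l0 else if val i == 1%N then l1 else l2.

Definition wdeg (l0 l1 l2 : nat) (m : 'X_{1..3}) : nat :=
  (\sum_(i < 3) wt l0 l1 l2 i * m i)%N.

Definition qhomog (l0 l1 l2 d : nat) (F : P) : Prop :=
  forall m, m \in msupp F -> wdeg l0 l1 l2 m = d.

Definition nonconstant (F : P) : Prop := forall c : K, F != c%:MP.

(* an algebraic curve {F = 0} in P(l0,l1,l2): F nonconstant quasi-homogeneous *)
Definition curve_eq (l0 l1 l2 : nat) (F : P) : Prop :=
  (exists d, qhomog l0 l1 l2 d F) /\ nonconstant F.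

(* A 1-form omega = sum_i A i dx_i.  omega /\ dF has components
   A_i dF/dx_j - A_j dF/dx_i (i<j); invariance: omega /\ dF = F Theta
   for a polynomial 2-form Theta. *)
Definition invariant_curve (A : 'I_3 -> P) (F : P) : Prop :=
  exists Theta : 'I_3 -> 'I_3 -> P,
    forall i j : 'I_3, (i < j)%N ->
      A i * F^`M(j) - A j * F^`M(i) = F * Theta i j.

(* singular point: representative p in C^3 \ {0} where omega vanishes *)
Definition singular_at (A : 'I_3 -> P) (p : 'I_3 -> K) : Prop :=
  (exists i, p i != 0) /\ forall i, (A i).@[p] = 0.

End Foliation.

Definition Gpoly (K : fieldType) (l0 l1 l2 : nat) : {mpoly K[3]} :=
  'X_0 ^+ (l1 * l2) + 'X_1 ^+ (l0 * l2) + 'X_2 ^+ (l0 * l1).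

(* components of beta = x0x1x2 G (lam l1l2 dx0/x0 + mu l0l2 dx1/x1
   + gam l0l1 dx2/x2 - (lam+mu+gam) dG/G) *)
Definition beta (K : fieldType) (l0 l1 l2 : nat) (lam mu gam : K)
    (i : 'I_3) : {mpoly K[3]} :=
  let G := Gpoly K l0 l1 l2 in
  let s := lam + mu + gam in
  let x0 := 'X_0 : {mpoly K[3]} in
  let x1 := 'X_1 : {mpoly K[3]} in
  let x2 := 'X_2 : {mpoly K[3]} in
  if val i == 0%N then
    (lam * (l1 * l2)%:R) *: (x1 * x2 * G) - s *: (x0 * x1 * x2 * G^`M(i))
  else if val i == 1%N then
    (mu * (l0 * l2)%:R) *: (x0 * x2 * G) - s *: (x0 * x1 * x2 * G^`M(i))
  else
    (gam * (l0 * l1)%:R) *: (x0 * x1 * G) - s *: (x0 * x1 * x2 * G^`M(i)).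

Definition Zlin_indep3 (K : ringType) (a b c : K) : Prop :=
  forall u v w : int, u%:~R * a + v%:~R * b + w%:~R * c = 0 ->
    u = 0 /\ v = 0 /\ w = 0.

(* Main.v *)
Require Import Defs.
From HB Require Import structures.
From mathcomp Require Import all_boot all_order all_algebra.
From mathcomp Require Import reals complex.
From mathcomp Require Import mpoly.
From mathcomp Require Import cyclic cyclotomic separable.
From mathcomp Require Import ring zify.
Import Order.TTheory GRing.Theory Num.Theory.
Set Implicit Arguments. Unset Strict Implicit. Unset Printing Implicit Defensive.
Local Open Scope ring_scope.
Notation i0 := (0%R : 'I_3).
Notation i1 := (1%R : 'I_3).
Notation i2 := (2%R : 'I_3).
Section A.
Variable K : fieldType.
Local Notation P := {mpoly K[3]}.
Implicit Types (p q : P) (m u : 'X_{1..3}).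

Lemma mcoeffXM u p e : ('X_[u] * p)@_e = if (u <= e)%MM then p@_(e - u) else 0.
Proof.
case: ifP => h.
  by have H := submK h; rewrite -{1}H addmC mulrC mcoeffMX.
apply: memN_msupp_eq0; rewrite mulrC (perm_mem (msuppMX p u)).
apply/negP => /mapP [m' _ E]; by rewrite E lem_addr in h.
Qed.

Definition Eop i p : P := 'X_i * p^`M(i).

Lemma mcoeffE i p m : (Eop i p)@_m = (m i)%:R * p@_m.
Proof.
rewrite /Eop mcoeffXM; case: ifP => h.
  rewrite mcoeff_mderiv submK // mnmBE mnm1E eqxx.
  move: h; rewrite lep1mP => h; rewrite subn1 prednK ?lt0n //.
  by rewrite mulr_natl.
by move: h; rewrite lep1mP => /negbFE/eqP ->; rewrite mul0r.
Qed.

Definition sc (z : 'I_3 -> K) p : P := p \mPo [tuple (z i)%:MP * 'X_i | i < 3].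

Lemma mcoeff_sc z p m : (sc z p)@_m = (\prod_i z i ^+ m i) * p@_m.
Proof.
elim/mpolyind: p => [|c m' p _ _ IH]; first by rewrite /sc comp_mpoly0 !mcoeff0 mulr0.
rewrite /sc comp_mpolyD comp_mpolyZ comp_mpolyX mcoeffD -/(sc z p) IH mcoeffD mcoeffZ.
have -> : \prod_(i < 3) tnth [tuple (z i)%:MP * 'X_i | i < 3] i ^+ m' i
   = (\prod_i z i ^+ m' i)%:MP * 'X_[m'].
  rewrite (eq_bigr (fun i => (z i ^+ m' i)%:MP * 'X_i ^+ m' i)); last first.
    by move=> i _; rewrite tnth_mktuple exprMn rmorphXn.
  by rewrite big_split /= -rmorph_prod mpolyXE_id.
rewrite mcoeffCM mcoeffX mcoeffZ mcoeffX.
case: eqP => [->|_]; last by rewrite !mulr0 mulrDr !mulr0.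
by rewrite mulrDr !mulr1 [c * _]mulrC.
Qed.

Lemma scM z p q : sc z (p * q) = sc z p * sc z q.
Proof. by rewrite /sc rmorphM. Qed.
Lemma scD z p q : sc z (p + q) = sc z p + sc z q.
Proof. by rewrite /sc rmorphD. Qed.
Lemma scB z p q : sc z (p - q) = sc z p - sc z q.
Proof. by rewrite /sc rmorphB. Qed.
Lemma scC z c : sc z c%:MP = c%:MP.
Proof. by rewrite /sc comp_mpolyC. Qed.
Lemma scZ z c p : sc z (c *: p) = c *: sc z p.
Proof. by rewrite /sc comp_mpolyZ. Qed.
Lemma scX z k e : sc z ('X_k ^+ e) = (z k ^+ e) *: 'X_k ^+ e.
Proof. rewrite /sc rmorphXn /= comp_mpolyXU -tnth_nth tnth_mktuple exprMn -mul_mpolyC rmorphXn. by []. Qed.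
Lemma sc_prod z (I : eqType) (r : seq I) (F : I -> P) :
  sc z (\prod_(i <- r) F i) = \prod_(i <- r) sc z (F i).
Proof. by rewrite /sc rmorph_prod. Qed.

End A.
Section M.
Variables l0 l1 l2 : nat.
Lemma mw0 : wdeg l0 l1 l2 0%MM = 0%N.
Proof. by rewrite /wdeg big1 // => i _; rewrite mnm0E muln0. Qed.
Lemma mwD : {morph wdeg l0 l1 l2 : m1 m2 / (m1 + m2)%MM >-> (m1 + m2)%N}.
Proof. by move=> m1 m2; rewrite /wdeg -big_split; apply: eq_bigr => i _; rewrite mnmDE mulnDr. Qed.
HB.instance Definition _ := isMeasure.Build 3 (wdeg l0 l1 l2) mw0 mwD.
Variable K : fieldType.
Lemma test (p q : {mpoly K[3]}) d e : p \is [in K[3], d.-homog for wdeg l0 l1 l2] -> q \is [in K[3], e.-homog for wdeg l0 l1 l2] -> p * q \is [in K[3], (d+e).-homog for wdeg l0 l1 l2].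
Proof. exact: dhomogM. Qed.
End M.
Check test.
Section A2.
Variable K : fieldType.
Local Notation P := {mpoly K[3]}.
Implicit Types (p q : P) (m u : 'X_{1..3}).

Lemma sc_comp z z' p : sc z (sc z' p) = sc (fun i => z i * z' i) p.
Proof.
apply/mpolyP => m; rewrite !mcoeff_sc mulrA; congr (_ * _).
by rewrite -big_split /=; apply: eq_bigr => i _; rewrite exprMn.
Qed.

Lemma sc1 p : sc (fun _ => 1) p = p.
Proof.
apply/mpolyP => m; rewrite mcoeff_sc big1 ?mul1r // => i _; exact: expr1n.
Qed.

Lemma sc_supp z p m : m \in msupp (sc z p) -> m \in msupp p.
Proof. by rewrite !mcoeff_msupp mcoeff_sc; apply: contra => /eqP ->; rewrite mulr0. Qed.

Lemma scE z i p : sc z (Eop i p) = Eop i (sc z p).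
Proof. by apply/mpolyP => m; rewrite mcoeff_sc !mcoeffE mcoeff_sc mulrCA. Qed.

Lemma sc_meval z p (v : 'I_3 -> K) : (sc z p).@[v] = p.@[fun i => z i * v i].
Proof.
rewrite /sc comp_mpoly_meval; apply: meval_eq => i.
by rewrite tnth_mktuple mevalM mevalC mevalXU.
Qed.

Lemma EopX i m : Eop i ('X_[m] : P) = (m i)%:R *: 'X_[m].
Proof.
apply/mpolyP => k; rewrite mcoeffE mcoeffZ !mcoeffX.
by case: eqP => [->|_]; rewrite ?mulr0 ?mulr1.
Qed.

Lemma EopM i p q : Eop i (p * q) = Eop i p * q + p * Eop i q.
Proof. by rewrite /Eop mderivM; ring. Qed.

Lemma EopD i p q : Eop i (p + q) = Eop i p + Eop i q.
Proof. by rewrite /Eop mderivD mulrDr. Qed.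

Lemma EopB i p q : Eop i (p - q) = Eop i p - Eop i q.
Proof. by rewrite /Eop mderivB mulrBr. Qed.

Lemma EopZ i c p : Eop i (c *: p) = c *: Eop i p.
Proof. by rewrite /Eop mderivZ -!mul_mpolyC; ring. Qed.

Lemma EopC i c : Eop i (c%:MP : P) = 0.
Proof. by rewrite /Eop mderivC mulr0. Qed.

Lemma Eop_supp i p m : m \in msupp (Eop i p) -> m \in msupp p.
Proof. by rewrite !mcoeff_msupp mcoeffE; apply: contra => /eqP ->; rewrite mulr0. Qed.

Lemma mcoeffXU_M j p e : ('X_j * p)@_e = if (U_(j) <= e)%MM then p@_(e - U_(j)) else 0.
Proof. exact: mcoeffXM. Qed.
End A2.
Section Fol.
Variable C : numClosedFieldType.
Variables (l0 l1 l2 : nat) (lam mu gam : C).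
Local Notation P := {mpoly C[3]}.
Local Notation mw := (wdeg l0 l1 l2).
Local Notation hom d p := (p \is [in C[3], d.-homog for wdeg l0 l1 l2]).
Local Notation n0 := (l1 * l2)%N.
Local Notation n1 := (l0 * l2)%N.
Local Notation n2 := (l0 * l1)%N.
Local Notation L := (l0 * l1 * l2)%N.
Local Notation G := (Gpoly C l0 l1 l2).
Local Notation s := (lam + mu + gam).

Definition B0 : P := lam%:MP * G - s%:MP * 'X_0 ^+ n0.
Definition B1 : P := mu%:MP * G - s%:MP * 'X_1 ^+ n1.
Definition B2 : P := gam%:MP * G - s%:MP * 'X_2 ^+ n2.
Definition W (p : P) : P := l0%:R * B1 * Eop 0 p - l1%:R * B0 * Eop 1 p.

Lemma Bsum : B0 + B1 + B2 = 0.
Proof. rewrite /B0 /B1 /B2 /Gpoly !rmorphD /=; ring. Qed.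

Lemma WM p q : W (p * q) = W p * q + p * W q.
Proof. rewrite /W !EopM; ring. Qed.
Lemma WD p q : W (p + q) = W p + W q.
Proof. rewrite /W !EopD; ring. Qed.
Lemma WB p q : W (p - q) = W p - W q.
Proof. rewrite /W !EopB; ring. Qed.
Lemma WZ c p : W (c *: p) = c *: W p.
Proof. rewrite /W !EopZ -!mul_mpolyC; ring. Qed.
Lemma WC c : W c%:MP = 0.
Proof. rewrite /W !EopC; ring. Qed.

Lemma W_X m : W 'X_[m] = ((l0 * m 0)%:R * B1 - (l1 * m 1)%:R * B0) * 'X_[m].
Proof. rewrite /W !EopX -!mul_mpolyC !mpolyC_nat !natrM; ring. Qed.

Lemma EopXn i j k : Eop i ('X_j ^+ k : P) = ((i == j) * k)%:R * 'X_j ^+ k.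
Proof.
by rewrite mpolyXn EopX mulmnE mnm1E -mpolyC_nat mul_mpolyC eq_sym.
Qed.

Lemma W_pow p k : W (p ^+ k) = k%:R * p ^+ k.-1 * W p.
Proof.
elim: k => [|k IH]; first by rewrite expr0 -mpolyC1 WC mul0r mul0r.
rewrite exprS WM IH; case: k IH => [|k] _ /=.
  ring.
rewrite [p ^+ k.+1]exprS; ring.
Qed.

Lemma WG : W G = L%:R * G * (mu%:MP * 'X_0 ^+ n0 - lam%:MP * 'X_1 ^+ n1).
Proof.
rewrite /W /Gpoly !EopD !EopXn /= !mul1n !mul0n /B0 /B1 /Gpoly !rmorphD /=.
rewrite !natrM; ring.
Qed.

End Fol.
Section Fol2.
Variable C : numClosedFieldType.
Variables (l0 l1 l2 : nat) (lam mu gam : C).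
Local Notation P := {mpoly C[3]}.
Local Notation n0 := (l1 * l2)%N.
Local Notation n1 := (l0 * l2)%N.
Local Notation n2 := (l0 * l1)%N.
Local Notation L := (l0 * l1 * l2)%N.
Local Notation G := (Gpoly C l0 l1 l2).
Local Notation s := (lam + mu + gam).
Local Notation B0 := (B0 l0 l1 l2 lam mu gam).
Local Notation B1 := (B1 l0 l1 l2 lam mu gam).
Local Notation B2 := (B2 l0 l1 l2 lam mu gam).
Local Notation W := (W l0 l1 l2 lam mu gam).
Local Notation beta := (beta l0 l1 l2 lam mu gam).

Lemma EopG0 : Eop 0 G = n0%:R * 'X_0 ^+ n0.
Proof. rewrite /Gpoly !EopD !EopXn /=; ring. Qed.
Lemma EopG1 : Eop 1 G = n1%:R * 'X_1 ^+ n1.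
Proof. rewrite /Gpoly !EopD !EopXn /=; ring. Qed.
Lemma EopG2 : Eop 2 G = n2%:R * 'X_2 ^+ n2.
Proof. rewrite /Gpoly !EopD !EopXn /=; ring. Qed.

Lemma betaE0 : beta 0 = n0%:R * ('X_1 * 'X_2) * B0.
Proof.
rewrite /beta /=.
have -> : 'X_0 * 'X_1 * 'X_2 * (Gpoly C l0 l1 l2)^`M(0) = 'X_1 * 'X_2 * Eop 0 G by rewrite /Eop; ring.
rewrite EopG0 /B0 -!mul_mpolyC rmorphM /= mpolyC_nat; ring.
Qed.
Lemma betaE1 : beta 1 = n1%:R * ('X_0 * 'X_2) * B1.
Proof.
rewrite /beta /=.
have -> : 'X_0 * 'X_1 * 'X_2 * (Gpoly C l0 l1 l2)^`M(1) = 'X_0 * 'X_2 * Eop 1 G by rewrite /Eop; ring.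
rewrite EopG1 /B1 -!mul_mpolyC rmorphM /= mpolyC_nat; ring.
Qed.
Lemma betaE2 : beta 2 = n2%:R * ('X_0 * 'X_1) * B2.
Proof.
rewrite /beta /=.
have -> : 'X_0 * 'X_1 * 'X_2 * (Gpoly C l0 l1 l2)^`M(2) = 'X_0 * 'X_1 * Eop 2 G by rewrite /Eop; ring.
rewrite EopG2 /B2 -!mul_mpolyC rmorphM /= mpolyC_nat; ring.
Qed.

End Fol2.
Lemma wdegE l0 l1 l2 (m : 'X_{1..3}) : wdeg l0 l1 l2 m = (l0 * m i0 + l1 * m i1 + l2 * m i2)%N.
Proof.
rewrite /wdeg !big_ord_recr big_ord0 /= /wt /=.
have -> : widen_ord (leqnSn 2) (widen_ord (leqnSn 1) ord_max) = i0 by apply/val_inj.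
have -> : widen_ord (leqnSn 2) ord_max = i1 by apply/val_inj.
have -> : (ord_max : 'I_3) = i2 by apply/val_inj.
by rewrite add0n.
Qed.

Lemma mcoeffNatM (C : fieldType) k (p : {mpoly C[3]}) m : (k%:R * p)@_m = k%:R * p@_m.
Proof. by rewrite -mpolyC_nat mcoeffCM. Qed.

Lemma euler (C : fieldType) l0 l1 l2 d (p : {mpoly C[3]}) : qhomog l0 l1 l2 d p ->
  l0%:R * Eop 0 p + l1%:R * Eop 1 p + l2%:R * Eop 2 p = d%:R * p.
Proof.
move=> hp; apply/mpolyP => m; rewrite !mcoeffD !mcoeffNatM !mcoeffE.
case: (boolP (m \in msupp p)) => hm; last by rewrite (memN_msupp_eq0 hm) !mulr0 !addr0.
by rewrite -(hp m hm) wdegE !natrD !natrM; ring.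
Qed.

Lemma Xneq0 (C : fieldType) (i : 'I_3) : ('X_i : {mpoly C[3]}) != 0.
Proof. by apply/eqP => /(congr1 (mcoeff U_(i))); rewrite mcoeffX eqxx mcoeff0 => /eqP; rewrite oner_eq0. Qed.

Lemma coprime12 (C : fieldType) (F Q a b : {mpoly C[3]}) : F != 0 ->
  'X_1 * Q = F * a -> 'X_2 * Q = F * b -> exists k, Q = F * k.
Proof.
move=> F0 h1 h2.
have e : 'X_2 * a = 'X_1 * b.
  apply: (mulfI F0); rewrite [LHS]mulrCA [RHS]mulrCA -h1 -h2; ring.
pose a' := \sum_(m <- msupp a) a@_m *: ('X_[m - U_(1)] : {mpoly C[3]}).
have ha : a = 'X_1 * a'.
  rewrite {1}(mpolyE a) /a' mulr_sumr; apply: eq_big_seq => m hm.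
  rewrite -scalerAr -mpolyXD addmC submK //.
  have := congr1 (mcoeff (m + U_(2))%MM) e.
  rewrite !mcoeffXM lem_addl addmK; case: ifP => [h _|_ /eqP h].
    by move: h; rewrite !lep1mP mnmDE mnm1E /= addn0.
  by move: hm; rewrite mcoeff_msupp h.
exists a'; apply: (mulfI (Xneq0 C 1)); rewrite h1 ha; ring.
Qed.
Lemma cancel_const (C : fieldType) (c : C) (p q : {mpoly C[3]}) :
  c != 0 -> c%:MP * p = q -> p = (c^-1)%:MP * q.
Proof. by move=> c0 <-; rewrite mulrA -rmorphM mulVf // rmorph1 mul1r. Qed.

Section Fol3.
Variable C : numClosedFieldType.
Variables (l0 l1 l2 : nat) (lam mu gam : C).
Local Notation P := {mpoly C[3]}.
Local Notation n0 := (l1 * l2)%N.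
Local Notation n1 := (l0 * l2)%N.
Local Notation n2 := (l0 * l1)%N.
Local Notation G := (Gpoly C l0 l1 l2).
Local Notation B0 := (B0 l0 l1 l2 lam mu gam).
Local Notation B1 := (B1 l0 l1 l2 lam mu gam).
Local Notation B2 := (B2 l0 l1 l2 lam mu gam).
Local Notation W := (W l0 l1 l2 lam mu gam).
Local Notation beta := (beta l0 l1 l2 lam mu gam).

Lemma inv_W d (F : P) : F != 0 -> qhomog l0 l1 l2 d F -> invariant_curve beta F ->
  (0 < l1)%N -> (0 < l2)%N -> exists K, W F = K * F.
Proof.
move=> F0 hF [Th hTh] hl1 hl2.
have c1 : (l1%:R : C) != 0 by rewrite pnatr_eq0 -lt0n.
have c2 : (l2%:R : C) != 0 by rewrite pnatr_eq0 -lt0n.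
have h01 := hTh i0 i1 erefl; have h02 := hTh i0 i2 erefl.
rewrite betaE0 betaE1 in h01; rewrite betaE0 betaE2 in h02.
have e1 : (- (l2%:R : C))%:MP * ('X_2 * W F) = F * Th i0 i1.
  rewrite -h01 /W /Eop rmorphN /= mpolyC_nat !natrM; ring.
have B2E : B2 = - B0 - B1 by rewrite /B0 /B1 /B2 /Gpoly !rmorphD /=; ring.
have e2 : (l1%:R : C)%:MP * ('X_1 * W F) = F * (Th i0 i2 - d%:R * B0 * 'X_1 * l1%:R).
  have eu := euler hF.
  rewrite [F * (_ - _)]mulrBr -h02 B2E.
  apply/eqP; rewrite -subr_eq0; apply/eqP.
  transitivity (l1%:R * 'X_1 * B0 * (d%:R * F - (l0%:R * Eop 0 F + l1%:R * Eop 1 F + l2%:R * Eop 2 F))).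
    rewrite /W /Eop mpolyC_nat !natrM; ring.
  by rewrite eu subrr mulr0.
have c2' : - (l2%:R : C) != 0 by rewrite oppr_eq0.
have e1' := cancel_const c2' e1.
have e2' := cancel_const c1 e2.
have [k hk] := coprime12 F0 (etrans e2' (mulrCA _ _ _)) (etrans e1' (mulrCA _ _ _)).
by exists k; rewrite hk mulrC.
Qed.
End Fol3.
Definition nn (l0 l1 l2 : nat) (j : 'I_3) : nat :=
  if val j == 0%N then (l1 * l2)%N else if val j == 1%N then (l0 * l2)%N else (l0 * l1)%N.
Lemma nn0 l0 l1 l2 : nn l0 l1 l2 i0 = (l1 * l2)%N. Proof. by []. Qed.
Lemma nn1 l0 l1 l2 : nn l0 l1 l2 i1 = (l0 * l2)%N. Proof. by []. Qed.
Lemma nn2 l0 l1 l2 : nn l0 l1 l2 i2 = (l0 * l1)%N. Proof. by []. Qed.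
Lemma i3_cases (j : 'I_3) : [\/ j = i0, j = i1 | j = i2].
Proof. by case: j => [[|[|[|k]]] hk] //=; [constructor 1|constructor 2|constructor 3]; apply/val_inj. Qed.
Section Norm.
Variable C : numClosedFieldType.
Variables (l0 l1 l2 : nat) (lam mu gam : C).
Local Notation P := {mpoly C[3]}.
Local Notation n0 := (l1 * l2)%N.
Local Notation n1 := (l0 * l2)%N.
Local Notation n2 := (l0 * l1)%N.
Local Notation L := (l0 * l1 * l2)%N.
Local Notation G := (Gpoly C l0 l1 l2).
Local Notation B0 := (B0 l0 l1 l2 lam mu gam).
Local Notation B1 := (B1 l0 l1 l2 lam mu gam).
Local Notation B2 := (B2 l0 l1 l2 lam mu gam).
Local Notation W := (W l0 l1 l2 lam mu gam).
Local Notation hom d p := (p \is [in C[3], d.-homog for wdeg l0 l1 l2]).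
Local Notation nn := (nn l0 l1 l2).

Definition zv (i : 'I_3) (w : C) : 'I_3 -> C := fun k => if k == i then w else 1.

Lemma sc_ext z z' (p : P) : z =1 z' -> sc z p = sc z' p.
Proof. by move=> e; apply/mpolyP => m; rewrite !mcoeff_sc; congr (_ * _); apply: eq_bigr => i _; rewrite e. Qed.

Lemma scNat z k : sc z (k%:R : P) = k%:R.
Proof. by rewrite -mpolyC_nat scC. Qed.

Lemma scG z : (forall k, z k ^+ nn k = 1) -> sc z G = G.
Proof.
move=> h; rewrite /Gpoly !scD !scX.
by rewrite -[n0]/(nn i0) -[n1]/(nn i1) -[n2]/(nn i2) !h !scale1r.
Qed.

Lemma scW z (p : P) : (forall k, z k ^+ nn k = 1) -> sc z (W p) = W (sc z p).
Proof.
move=> h; rewrite /W scB (scM z _ (Eop i0 p)) (scM z _ (Eop i1 p)) !scE !scM !scNat.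
have e0 : sc z B0 = B0 by rewrite /B0 scB !scM !scC scG // scX -[n0]/(nn i0) h scale1r.
have e1 : sc z B1 = B1 by rewrite /B1 scB !scM !scC scG // scX -[n1]/(nn i1) h scale1r.
by rewrite e0 e1.
Qed.

Lemma hom_sc z d (p : P) : hom d p -> hom d (sc z p).
Proof. by move=> /dhomogP h; apply/dhomogP => m /sc_supp /h. Qed.

Lemma sc_neq0 z (p : P) : (forall k, z k != 0) -> p != 0 -> sc z p != 0.
Proof.
move=> hz p0; have := mlead_supp p0; rewrite mcoeff_msupp => hm.
apply/eqP => /(congr1 (mcoeff (mlead p))); rewrite mcoeff_sc mcoeff0 => /eqP.
rewrite mulf_eq0 (negbTE hm) orbF; apply/negP; apply/prodf_neq0 => k _; exact: expf_neq0.
Qed.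

Lemma W_prod (r : seq nat) (f g : nat -> P) : (forall j, W (f j) = g j * f j) ->
  W (\prod_(j <- r) f j) = (\sum_(j <- r) g j) * \prod_(j <- r) f j.
Proof.
move=> h; elim: r => [|a r IH]; first by rewrite !big_nil -mpolyC1 WC mul0r.
by rewrite !big_cons WM IH h; ring.
Qed.

Lemma hom_prod (r : seq nat) (f : nat -> P) : (forall j, exists d, hom d (f j)) ->
  exists d, hom d (\prod_(j <- r) f j).
Proof.
move=> h; elim: r => [|a r [d IH]]; first by exists 0%N; rewrite big_nil dhomog1.
have [e he] := h a; exists (e + d)%N; rewrite big_cons; exact: dhomogM.
Qed.

Lemma hom_sum (r : seq nat) (f : nat -> P) d : (forall j, hom d (f j)) -> hom d (\sum_(j <- r) f j).
Proof.
move=> h; elim: r => [|a r IH]; first by rewrite big_nil dhomog0.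
by rewrite big_cons; apply: dhomogD.
Qed.

Lemma zv_pow i w : w ^+ nn i = 1 -> forall k, zv i w k ^+ nn k = 1.
Proof. by move=> h k; rewrite /zv; case: eqP => [->|_] //; rewrite expr1n. Qed.

Lemma norm_step i w (p K : P) d : w ^+ nn i = 1 -> (0 < nn i)%N ->
  p != 0 -> hom d p -> W p = K * p -> hom L K ->
  let N := \prod_(0 <= j < nn i) sc (zv i (w ^+ j)) p in
  [/\ N != 0, (exists d', hom d' N), (exists K', W N = K' * N /\ hom L K'),
     sc (zv i w) N = N &
     ((forall z, sc z p = p -> sc z N = N) /\
     (forall v, p.@[v] = 0 -> N.@[v] = 0))].
Proof.
move=> hw hn p0 hp hK hKL N.
have w0 : w != 0.
  apply/eqP => w0; move: hw; rewrite w0 expr0n; case: (nn i) hn => // k _ /eqP.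
  by rewrite eq_sym oner_eq0.
have hzj j k : zv i (w ^+ j) k ^+ nn k = 1.
  by apply: zv_pow; rewrite exprAC hw expr1n.
have hWj j : W (sc (zv i (w ^+ j)) p) = sc (zv i (w ^+ j)) K * sc (zv i (w ^+ j)) p.
  by rewrite -scW // hK scM.
have f0 : sc (zv i (w ^+ 0)) p = p.
  by rewrite -[RHS]sc1; apply: sc_ext => k; rewrite /zv expr0; case: ifP.
split.
- rewrite /N prodf_seq_neq0; apply/allP => j _ /=; apply: sc_neq0 => // k.
  by rewrite /zv; case: ifP => _; rewrite ?expf_neq0 ?oner_eq0.
- by apply: hom_prod => j; exists d; apply: hom_sc.
- exists (\sum_(0 <= j < nn i) sc (zv i (w ^+ j)) K); split; first exact: W_prod.
  by apply: hom_sum => j; apply: hom_sc.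
- rewrite /N sc_prod.
  have -> : \prod_(0 <= j < nn i) sc (zv i w) (sc (zv i (w ^+ j)) p)
          = \prod_(0 <= j < nn i) sc (zv i (w ^+ j.+1)) p.
    apply: eq_bigr => j _; rewrite sc_comp; apply: sc_ext => k.
    by rewrite /zv; case: ifP => _; rewrite ?exprS ?mulr1.
  case: (nn i) hn hw => // n' _ hw'.
  rewrite big_nat_recr //= big_nat_recl //.
  have -> : sc (zv i (w ^+ n'.+1)) p = sc (zv i (w ^+ 0)) p by rewrite hw' expr0.
  by rewrite mulrC.
split.
- move=> z hz; rewrite /N sc_prod; apply: eq_bigr => j _.
  rewrite sc_comp -{2}hz sc_comp; apply: sc_ext => k; exact: mulrC.
- move=> v hv; rewrite /N.
  case: (nn i) hn => // n' _.
  rewrite big_nat_recl // f0 mevalM hv mul0r //.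
Qed.
End Norm.
Lemma sum3 (R : nmodType) (f : 'I_3 -> R) : \sum_(j < 3) f j = f i0 + f i1 + f i2.
Proof.
rewrite !big_ord_recr big_ord0 /= add0r.
have -> : widen_ord (leqnSn 2) (widen_ord (leqnSn 1) ord_max) = i0 by apply/val_inj.
have -> : widen_ord (leqnSn 2) ord_max = i1 by apply/val_inj.
by have -> : (ord_max : 'I_3) = i2 by apply/val_inj.
Qed.

Section Face.
Variable C : numClosedFieldType.
Variables (l0 l1 l2 : nat) (lam mu gam : C).
Local Notation P := {mpoly C[3]}.
Local Notation n0 := (l1 * l2)%N.
Local Notation n1 := (l0 * l2)%N.
Local Notation n2 := (l0 * l1)%N.
Local Notation L := (l0 * l1 * l2)%N.
Local Notation G := (Gpoly C l0 l1 l2).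
Local Notation B0 := (B0 l0 l1 l2 lam mu gam).
Local Notation B1 := (B1 l0 l1 l2 lam mu gam).
Local Notation W := (W l0 l1 l2 lam mu gam).
Local Notation hom d p := (p \is [in C[3], d.-homog for wdeg l0 l1 l2]).
Local Notation nn := (nn l0 l1 l2).

Definition uu (j : 'I_3) : 'X_{1..3} := (U_(j) *+ nn j)%MM.
Definition c0f (j : 'I_3) : C :=
  if val j == 0%N then l0%:R * mu else if val j == 1%N then - (l0%:R * (lam + gam)) else l0%:R * mu.
Definition c1f (j : 'I_3) : C :=
  if val j == 0%N then l1%:R * (mu + gam) else - (l1%:R * lam).
Definition ell j (m : 'X_{1..3}) : C := c0f j * (m i0)%:R + c1f j * (m i1)%:R.
Definition Dop j (p : P) : P := (c0f j)%:MP * Eop i0 p + (c1f j)%:MP * Eop i1 p.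

Lemma mcoeffD_op j p m : (Dop j p)@_m = ell j m * p@_m.
Proof. by rewrite /Dop mcoeffD !mcoeffCM !mcoeffE /ell; ring. Qed.

Lemma Xuu j : ('X_[uu j] : P) = 'X_j ^+ nn j.
Proof. by rewrite /uu mpolyXn. Qed.

Lemma W_decomp p : W p = \sum_(j < 3) 'X_[uu j] * Dop j p.
Proof.
rewrite sum3 !Xuu /W /Dop /B0 /B1 /Gpoly /c0f /c1f /= !rmorphD !rmorphN !rmorphM /= !mpolyC_nat; ring.
Qed.

Lemma face (p : P) (kap : 'I_3 -> C) j0 m :
  W p = (\sum_(j < 3) kap j *: 'X_[uu j]) * p -> m \in msupp p ->
  (forall j, j != j0 -> (uu j <= m + uu j0)%MM -> p@_(m + uu j0 - uu j) = 0) ->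
  ell j0 m = kap j0.
Proof.
move=> hW hm hn.
have := congr1 (mcoeff (m + uu j0)%MM) hW.
rewrite W_decomp mulr_suml !raddf_sum /= (bigD1 j0) //= (bigD1 j0 (P := xpredT)) //=.
rewrite big1; last first.
  move=> j hj; rewrite mcoeffXM; case: ifP => // h.
  by rewrite mcoeffD_op hn // mulr0.
rewrite big1; last first.
  move=> j hj; rewrite -scalerAl mcoeffZ mcoeffXM; case: ifP => h; last by rewrite mulr0.
  by rewrite hn // mulr0.
rewrite -scalerAl mcoeffZ !mcoeffXM lem_addl addmK mcoeffD_op !addr0.
by move/eqP; rewrite mcoeff_msupp in hm; rewrite -subr_eq0 -mulrBl mulf_eq0 (negbTE hm) orbF subr_eq0 => /eqP.
Qed.
End Face.
Lemma uuE l0 l1 l2 (j k : 'I_3) : uu l0 l1 l2 j k = ((j == k) * nn l0 l1 l2 j)%N.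
Proof. by rewrite /uu mulmnE mnm1E. Qed.

Lemma lexmin (S : seq 'X_{1..3}) (f g : 'X_{1..3} -> nat) : S != [::] ->
  exists2 m, m \in S & (forall m', m' \in S -> f m <= f m')%N /\
     (forall m', m' \in S -> f m' = f m -> g m <= g m')%N.
Proof.
case: S => // x S _.
have ex1 : exists k, has (fun m => f m == k) (x :: S) by exists (f x); rewrite /= eqxx.
case: (ex_minnP ex1) => k1 /hasP [y hy /eqP hfy] hk1.
have ex2 : exists k, has (fun m => (f m == k1) && (g m == k)) (x :: S).
  by exists (g y); apply/hasP; exists y => //; rewrite hfy !eqxx.
case: (ex_minnP ex2) => k2 /hasP [z hz /andP [/eqP hfz /eqP hgz]] hk2.
exists z => //; split.
  by move=> m' hm'; rewrite hfz; apply: hk1; apply/hasP; exists m'.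
move=> m' hm' e; rewrite hgz; apply: hk2; apply/hasP; exists m' => //.
by rewrite e hfz !eqxx.
Qed.

Lemma indep_eq (C : numClosedFieldType) (lam mu gam : C) (a b c a' b' c' : nat) :
  Zlin_indep3 lam mu gam ->
  a%:R * lam + b%:R * mu + c%:R * gam = a'%:R * lam + b'%:R * mu + c'%:R * gam ->
  [/\ a = a', b = b' & c = c'].
Proof.
move=> hi e.
have := hi (a%:Z - a'%:Z) (b%:Z - b'%:Z) (c%:Z - c'%:Z).
rewrite !rmorphB /= -!pmulrn.
have -> : (a%:R - a'%:R) * lam + (b%:R - b'%:R) * mu + (c%:R - c'%:R) * gam =
   (a%:R * lam + b%:R * mu + c%:R * gam) - (a'%:R * lam + b'%:R * mu + c'%:R * gam) :> C by ring.
rewrite e subrr => /(_ erefl) [/eqP h1 [/eqP h2 /eqP h3]].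
by split; apply/eqP; rewrite -eqz_nat -subr_eq0.
Qed.
Section Face2.
Variable C : numClosedFieldType.
Variables (l0 l1 l2 : nat) (lam mu gam : C).
Hypotheses (hl0 : (0 < l0)%N) (hl1 : (0 < l1)%N) (hl2 : (0 < l2)%N).
Local Notation P := {mpoly C[3]}.
Local Notation W := (W l0 l1 l2 lam mu gam).
Local Notation nn := (nn l0 l1 l2).
Local Notation uu := (uu l0 l1 l2).
Local Notation ell := (ell l0 l1 lam mu gam).

Lemma nn_gt0 j : (0 < nn j)%N.
Proof. by case: (i3_cases j) => ->; rewrite /nn /= muln_gt0 ?hl0 ?hl1 ?hl2. Qed.

Lemma face_lex (p : P) kap j0 f g m :
  W p = (\sum_(j < 3) kap j *: 'X_[uu j]) * p ->
  (forall j, j != j0 -> j = f \/ j = g) -> f != g -> f != j0 -> g != j0 ->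
  m \in msupp p ->
  (forall m', m' \in msupp p -> m f <= m' f)%N ->
  (forall m', m' \in msupp p -> m' f = m f -> m g <= m' g)%N ->
  ell j0 m = kap j0.
Proof.
move=> hW hj fg fj gj hm h1 h2; apply: (face hW hm) => j hj0 hle.
apply: memN_msupp_eq0; apply/negP => hm'.
have e1 : (j0 == f) = false by rewrite eq_sym (negbTE fj).
have e2 : (j0 == g) = false by rewrite eq_sym (negbTE gj).
have e3 : (g == f) = false by rewrite eq_sym (negbTE fg).
case: (hj j hj0) => ej; subst j.
- have := mnm_lepP hle f; rewrite mnmDE !uuE eqxx e1 mul1n mul0n addn0 => hf.
  have := h1 _ hm'; rewrite mnmBE mnmDE !uuE eqxx e1 mul1n mul0n addn0.
  have := nn_gt0 f; lia.
- have := mnm_lepP hle g; rewrite mnmDE !uuE eqxx e2 mul1n mul0n addn0 => hg.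
  have := h2 _ hm'; rewrite !mnmBE !mnmDE !uuE eqxx e1 e3 !mul0n addn0 subn0.
  move=> /(_ erefl); rewrite e2 mul1n mul0n addn0. have := nn_gt0 g; lia.
Qed.
End Face2.
Section Pairs.
Variable C : numClosedFieldType.
Variables (l0 l1 l2 : nat) (lam mu gam : C).
Hypotheses (hl0 : (0 < l0)%N) (hl1 : (0 < l1)%N) (hl2 : (0 < l2)%N).
Hypothesis hind : Zlin_indep3 lam mu gam.
Local Notation P := {mpoly C[3]}.
Local Notation W := (W l0 l1 l2 lam mu gam).
Local Notation nn := (nn l0 l1 l2).
Local Notation uu := (uu l0 l1 l2).
Local Notation ell := (ell l0 l1 lam mu gam).
Local Notation hom d p := (p \is [in C[3], d.-homog for wdeg l0 l1 l2]).

Lemma ell2E m : ell i2 m = (l0 * m i0)%:R * mu - (l1 * m i1)%:R * lam.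
Proof. rewrite /ell /c0f /c1f /= !natrM; ring. Qed.
Lemma ell1E m : ell i1 m = - ((l0 * m i0)%:R * (lam + gam) + (l1 * m i1)%:R * lam).
Proof. rewrite /ell /c0f /c1f /= !natrM; ring. Qed.
Lemma ell0E m : ell i0 m = (l0 * m i0)%:R * mu + (l1 * m i1)%:R * (mu + gam).
Proof. rewrite /ell /c0f /c1f /= !natrM; ring. Qed.

Lemma homE D (p : P) m : hom D p -> m \in msupp p -> (l0 * m i0 + l1 * m i1 + l2 * m i2)%N = D.
Proof. by move=> /dhomog_mf h /h e; rewrite -e; exact: esym (wdegE l0 l1 l2 m). Qed.

Lemma others (j0 f g : 'I_3) : [/\ f != g, f != j0 & g != j0] -> (forall j, j != j0 -> j = f \/ j = g).
Proof.
move=> [fg fj gj] j jj.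
case: (i3_cases j) jj => -> jj; case: (i3_cases j0) fj gj jj => -> fj gj jj;
case: (i3_cases f) fg fj => -> fg fj; case: (i3_cases g) fg gj => -> fg gj;
first [by left | by right | by []].
Qed.

Lemma supp_neq0 (p : P) : p != 0 -> msupp p != [::].
Proof. by rewrite msupp_eq0. Qed.

Lemma pair2 (p : P) kap : p != 0 ->
  W p = (\sum_(j < 3) kap j *: 'X_[uu j]) * p ->
  exists2 nu, nu \in msupp p &
    [/\ (forall m, m \in msupp p -> nu i0 <= m i0)%N,
        (forall m, m \in msupp p -> nu i1 <= m i1)%N &
        kap i2 = ell i2 nu].
Proof.
move=> p0 hW.
have [m hm [m1 m2]] := lexmin (fun m => m i0) (fun m => m i1) (supp_neq0 p0).
have [m' hm' [m1' m2']] := lexmin (fun m => m i1) (fun m => m i0) (supp_neq0 p0).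
have e1 := face_lex hl0 hl1 hl2 hW (others (j0:=i2) (f:=i0) (g:=i1) (And3 erefl erefl erefl)) erefl erefl erefl hm m1 m2.
have e2 := face_lex hl0 hl1 hl2 hW (others (j0:=i2) (f:=i1) (g:=i0) (And3 erefl erefl erefl)) erefl erefl erefl hm' m1' m2'.
have := etrans e1 (esym e2); rewrite !ell2E => e.
have [h1 _ _] : [/\ (l1 * m' i1 = l1 * m i1)%N, (l0 * m i0 = l0 * m' i0)%N & 0%N = 0%N].
  apply: (indep_eq hind); apply/eqP; rewrite -subr_eq0; apply/eqP.
  transitivity ((l0 * m i0)%:R * mu - (l1 * m i1)%:R * lam - ((l0 * m' i0)%:R * mu - (l1 * m' i1)%:R * lam)).
    ring.
  by rewrite e subrr.
exists m => //; split => // m'' h''.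
have := m1' _ h''; move: h1; rewrite /= => h1; nia.
Qed.

Lemma pair1 (p : P) kap D : p != 0 -> hom D p ->
  W p = (\sum_(j < 3) kap j *: 'X_[uu j]) * p ->
  exists2 nu, nu \in msupp p &
    [/\ (forall m, m \in msupp p -> nu i0 <= m i0)%N,
        (forall m, m \in msupp p -> nu i2 <= m i2)%N &
        kap i1 = ell i1 nu].
Proof.
move=> p0 hD hW.
have [m hm [m1 m2]] := lexmin (fun m => m i0) (fun m => m i2) (supp_neq0 p0).
have [m' hm' [m1' m2']] := lexmin (fun m => m i2) (fun m => m i0) (supp_neq0 p0).
have e1 := face_lex hl0 hl1 hl2 hW (others (j0:=i1) (f:=i0) (g:=i2) (And3 erefl erefl erefl)) erefl erefl erefl hm m1 m2.
have e2 := face_lex hl0 hl1 hl2 hW (others (j0:=i1) (f:=i2) (g:=i0) (And3 erefl erefl erefl)) erefl erefl erefl hm' m1' m2'.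
have := etrans e1 (esym e2); rewrite !ell1E => e.
have [h1 _ h3] : [/\ (l0 * m i0 + l1 * m i1 = l0 * m' i0 + l1 * m' i1)%N, 0%N = 0%N & (l0 * m i0 = l0 * m' i0)%N].
  apply: (indep_eq hind); apply/eqP; rewrite -subr_eq0; apply/eqP.
  transitivity ((l0 * m i0)%:R * (lam + gam) + (l1 * m i1)%:R * lam - ((l0 * m' i0)%:R * (lam + gam) + (l1 * m' i1)%:R * lam)).
    rewrite !natrD; ring.
  by apply/eqP; rewrite subr_eq0 -eqr_opp; apply/eqP.
have hh := homE hD hm; have hh' := homE hD hm'.
exists m => //; split => // m'' h''.
have := m1' _ h''; move: h1 h3 hh hh' => /= h1 h3 hh hh'; nia.
Qed.

Lemma pair0 (p : P) kap D : p != 0 -> hom D p ->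
  W p = (\sum_(j < 3) kap j *: 'X_[uu j]) * p ->
  exists2 nu, nu \in msupp p &
    [/\ (forall m, m \in msupp p -> nu i1 <= m i1)%N,
        (forall m, m \in msupp p -> nu i2 <= m i2)%N &
        kap i0 = ell i0 nu].
Proof.
move=> p0 hD hW.
have [m hm [m1 m2]] := lexmin (fun m => m i1) (fun m => m i2) (supp_neq0 p0).
have [m' hm' [m1' m2']] := lexmin (fun m => m i2) (fun m => m i1) (supp_neq0 p0).
have e1 := face_lex hl0 hl1 hl2 hW (others (j0:=i0) (f:=i1) (g:=i2) (And3 erefl erefl erefl)) erefl erefl erefl hm m1 m2.
have e2 := face_lex hl0 hl1 hl2 hW (others (j0:=i0) (f:=i2) (g:=i1) (And3 erefl erefl erefl)) erefl erefl erefl hm' m1' m2'.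
have := etrans e1 (esym e2); rewrite !ell0E => e.
have [_ h2 h3] : [/\ 0%N = 0%N, (l0 * m i0 + l1 * m i1 = l0 * m' i0 + l1 * m' i1)%N & (l1 * m i1 = l1 * m' i1)%N].
  apply: (indep_eq hind); apply/eqP; rewrite -subr_eq0; apply/eqP.
  transitivity ((l0 * m i0)%:R * mu + (l1 * m i1)%:R * (mu + gam) - ((l0 * m' i0)%:R * mu + (l1 * m' i1)%:R * (mu + gam))).
    rewrite !natrD; ring.
  by rewrite e subrr.
have hh := homE hD hm; have hh' := homE hD hm'.
exists m => //; split => // m'' h''.
have := m1' _ h''; move: h2 h3 hh hh' => /= h2 h3 hh hh'; nia.
Qed.
End Pairs.
Section Struct.
Variable C : numClosedFieldType.
Variables (l0 l1 l2 : nat) (lam mu gam : C).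
Hypotheses (hl0 : (0 < l0)%N) (hl1 : (0 < l1)%N) (hl2 : (0 < l2)%N).
Local Notation P := {mpoly C[3]}.
Local Notation L := (l0 * l1 * l2)%N.
Local Notation nn := (nn l0 l1 l2).
Local Notation uu := (uu l0 l1 l2).
Local Notation hom d p := (p \is [in C[3], d.-homog for wdeg l0 l1 l2]).

Lemma zv_prod i (w : C) (m : 'X_{1..3}) : \prod_(k < 3) zv i w k ^+ m k = w ^+ m i.
Proof.
rewrite (bigD1 i) //= big1 ?mulr1 => [|k hk]; rewrite /zv ?eqxx //.
by case: eqP hk => [->|_ _]; rewrite ?eqxx ?andbF // expr1n.
Qed.

Lemma inv_dvd i w (p : P) : (nn i).-primitive_root w -> sc (zv i w) p = p ->
  forall m, m \in msupp p -> (nn i %| m i)%N.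
Proof.
move=> pw hs m hm; rewrite (prim_order_dvd pw).
have := congr1 (mcoeff m) hs; rewrite mcoeff_sc zv_prod => e.
rewrite mcoeff_msupp in hm; apply/eqP; apply: (mulIf hm); by rewrite mul1r.
Qed.

Lemma uu_neq j k : j != k -> uu j != uu k.
Proof.
move=> jk; apply/eqP => /mnmP /(_ j); rewrite !uuE eqxx eq_sym (negbTE jk) mul1n mul0n => /eqP.
have : (0 < nn j)%N by case: (i3_cases j) => ->; rewrite /nn /= muln_gt0 ?hl0 ?hl1 ?hl2.
by case: (nn j).
Qed.

Lemma supp_uu (K : P) m : hom L K -> (forall i m, m \in msupp K -> (nn i %| m i)%N) ->
  m \in msupp K -> exists j, m = uu j.
Proof.
move=> hK hd hm.
have hh := homE hK hm.
have d0 := hd i0 m hm; have d1 := hd i1 m hm; have d2 := hd i2 m hm.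
move: d0 d1 d2; rewrite /nn /= => /dvdnP [t0 e0] /dvdnP [t1 e1] /dvdnP [t2 e2].
have ht : (t0 + t1 + t2 = 1)%N.
  have h' : (L * (t0 + t1 + t2) = l0 * m i0 + l1 * m i1 + l2 * m i2)%N by rewrite e0 e1 e2; ring.
  have : (L * (t0 + t1 + t2) = L * 1)%N by rewrite h' hh muln1.
  by move/eqP; rewrite eqn_pmul2l ?muln_gt0 ?hl0 ?hl1 ?hl2 // => /eqP.
have mE : forall t0' t1' t2', t0 = t0' -> t1 = t1' -> t2 = t2' ->
  m = (U_(i0) *+ (t0' * (l1 * l2)) + U_(i1) *+ (t1' * (l0 * l2)) + U_(i2) *+ (t2' * (l0 * l1)))%MM.
  move=> ? ? ? <- <- <-; apply/mnmP => k; rewrite !mnmDE !mulmnE !mnm1E.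
  by case: (i3_cases k) => ->; rewrite /= ?e0 ?e1 ?e2 ?mul0n ?mul1n ?addn0 ?add0n.
have uE : forall j, uu j = (U_(j) *+ nn j)%MM by [].
have : [\/ (t0 = 1 /\ t1 = 0 /\ t2 = 0), (t0 = 0 /\ t1 = 1 /\ t2 = 0) | (t0 = 0 /\ t1 = 0 /\ t2 = 1)]%N.
  move: ht; clear; case: t0 => [|[|t0]] /=; case: t1 => [|[|t1]] /=; case: t2 => [|[|t2]] //= _;
   by [constructor 1|constructor 2|constructor 3].
case=> [[a [b c]]|[a [b c]]|[a [b c]]].
- exists i0; rewrite (mE 1 0 0)%N // uE; apply/mnmP => k; rewrite !mnmDE !mulmnE !mnm1E.
  by case: (i3_cases k) => ->; rewrite /= ?muln0 ?mul0n ?mul1n ?addn0 ?add0n.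
- exists i1; rewrite (mE 0 1 0)%N // uE; apply/mnmP => k; rewrite !mnmDE !mulmnE !mnm1E.
  by case: (i3_cases k) => ->; rewrite /= ?muln0 ?mul0n ?mul1n ?addn0 ?add0n.
- exists i2; rewrite (mE 0 0 1)%N // uE; apply/mnmP => k; rewrite !mnmDE !mulmnE !mnm1E.
  by case: (i3_cases k) => ->; rewrite /= ?muln0 ?mul0n ?mul1n ?addn0 ?add0n.
Qed.
End Struct.
Section Final.
Variable C : numClosedFieldType.
Variables (l0 l1 l2 : nat) (lam mu gam : C).
Hypotheses (hl0 : (0 < l0)%N) (hl1 : (0 < l1)%N) (hl2 : (0 < l2)%N).
Hypothesis hind : Zlin_indep3 lam mu gam.
Local Notation P := {mpoly C[3]}.
Local Notation L := (l0 * l1 * l2)%N.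
Local Notation n0 := (l1 * l2)%N.
Local Notation n1 := (l0 * l2)%N.
Local Notation n2 := (l0 * l1)%N.
Local Notation nn := (nn l0 l1 l2).
Local Notation uu := (uu l0 l1 l2).
Local Notation G := (Gpoly C l0 l1 l2).
Local Notation B0 := (B0 l0 l1 l2 lam mu gam).
Local Notation B1 := (B1 l0 l1 l2 lam mu gam).
Local Notation W := (W l0 l1 l2 lam mu gam).
Local Notation ell := (ell l0 l1 lam mu gam).
Local Notation hom d p := (p \is [in C[3], d.-homog for wdeg l0 l1 l2]).

Lemma K_struct (K : P) : hom L K -> (forall i m, m \in msupp K -> (nn i %| m i)%N) ->
  K = \sum_(j < 3) K@_(uu j) *: 'X_[uu j].
Proof.
move=> hK hd; apply/mpolyP => m; rewrite raddf_sum /= sum3 !mcoeffZ !mcoeffX.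
case: (boolP (m \in msupp K)) => hm.
  have [j ->] := supp_uu hl0 hl1 hl2 hK hd hm.
  case: (i3_cases j) => ->; rewrite eqxx ?(negbTE (uu_neq hl0 hl1 hl2 (j:=i0) (k:=i1) erefl))
    ?(negbTE (uu_neq hl0 hl1 hl2 (j:=i0) (k:=i2) erefl)) ?(negbTE (uu_neq hl0 hl1 hl2 (j:=i1) (k:=i2) erefl))
    ?(negbTE (uu_neq hl0 hl1 hl2 (j:=i1) (k:=i0) erefl)) ?(negbTE (uu_neq hl0 hl1 hl2 (j:=i2) (k:=i0) erefl))
    ?(negbTE (uu_neq hl0 hl1 hl2 (j:=i2) (k:=i1) erefl)) /=; ring.
have z j : K@_(uu j) * (uu j == m)%:R = 0.
  by case: eqP => [->|_]; rewrite ?(memN_msupp_eq0 hm) ?mul0r ?mulr0.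
by rewrite (memN_msupp_eq0 hm) !z !addr0.
Qed.

Lemma Gpow_coef e : (G ^+ e)@_(uu i2 *+ e)%MM = 1.
Proof.
elim: e => [|e IH]; first by rewrite expr0 mulm0n mcoeff1 eqxx.
have GE : G = 'X_[uu i0] + 'X_[uu i1] + 'X_[uu i2] by rewrite !Xuu.
rewrite exprSr {2}GE !mulrDr ![G ^+ e * _]mulrC !mcoeffD !mcoeffXM.
have h0 : (uu i0 <= uu i2 *+ e.+1)%MM = false.
  apply/negP => /mnm_lepP /(_ i0); rewrite mulmnE !uuE /= mul1n !mul0n.
  by have := nn_gt0 hl0 hl1 hl2 i0; case: (nn i0).
have h1 : (uu i1 <= uu i2 *+ e.+1)%MM = false.
  apply/negP => /mnm_lepP /(_ i1); rewrite mulmnE !uuE /= mul1n !mul0n.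
  by have := nn_gt0 hl0 hl1 hl2 i1; case: (nn i1).
rewrite h0 h1 mulmS lem_addr addmC addmK IH; ring.
Qed.

Lemma W_Gpow e : W (G ^+ e) = (e * L)%:R * (mu%:MP * 'X_0 ^+ n0 - lam%:MP * 'X_1 ^+ n1) * G ^+ e.
Proof.
rewrite W_pow WG; case: e => [|e]; first by rewrite /= mul0n; ring.
rewrite /= exprS natrM; ring.
Qed.

End Final.
Section Final2.
Variable C : numClosedFieldType.
Variables (l0 l1 l2 : nat) (lam mu gam : C).
Hypotheses (hl0 : (0 < l0)%N) (hl1 : (0 < l1)%N) (hl2 : (0 < l2)%N).
Hypothesis hind : Zlin_indep3 lam mu gam.
Local Notation P := {mpoly C[3]}.
Local Notation L := (l0 * l1 * l2)%N.
Local Notation n0 := (l1 * l2)%N.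
Local Notation n1 := (l0 * l2)%N.
Local Notation n2 := (l0 * l1)%N.
Local Notation nn := (nn l0 l1 l2).
Local Notation uu := (uu l0 l1 l2).
Local Notation G := (Gpoly C l0 l1 l2).
Local Notation B0 := (B0 l0 l1 l2 lam mu gam).
Local Notation B1 := (B1 l0 l1 l2 lam mu gam).
Local Notation W := (W l0 l1 l2 lam mu gam).
Local Notation ell := (ell l0 l1 lam mu gam).
Local Notation hom d p := (p \is [in C[3], d.-homog for wdeg l0 l1 l2]).

Lemma prod_uu (v : 'I_3 -> C) j : \prod_(k < 3) v k ^+ uu j k = v j ^+ nn j.
Proof.
rewrite (bigD1 j) //= big1 ?mulr1 => [|k hk]; first by rewrite uuE eqxx mul1n.
by rewrite uuE eq_sym (negbTE hk) mul0n expr0.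
Qed.

Lemma hom_G : hom L G.
Proof.
have GE : G = 'X_[uu i0] + 'X_[uu i1] + 'X_[uu i2] by rewrite !Xuu.
rewrite GE; apply: dhomogD; first apply: dhomogD.
all: rewrite dhomogX; apply/eqP; rewrite /= wdegE !uuE /= ?nn0 ?nn1 ?nn2; ring.
Qed.

Lemma s_neq0 : lam + mu + gam != 0.
Proof.
apply/eqP => h.
have [] := indep_eq (a:=1) (b:=1) (c:=1) (a':=0) (b':=0) (c':=0) hind; last by [].
by rewrite !mul1r h !mul0r !addr0.
Qed.

Lemma final_contra (Pn : P) (kap : 'I_3 -> C) D (p : 'I_3 -> C) :
  Pn != 0 -> hom D Pn -> W Pn = (\sum_(j < 3) kap j *: 'X_[uu j]) * Pn ->
  (forall i m, m \in msupp Pn -> (nn i %| m i)%N) ->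
  (forall i, p i != 0) -> p i0 ^+ n0 = lam -> p i1 ^+ n1 = mu -> p i2 ^+ n2 = gam ->
  Pn.@[p] = 0 -> False.
Proof.
move=> P0 hD hW hdv pn0 pl pm pg Pp.
have [nu hnu [a0 a1 k2]] := pair2 hl0 hl1 hl2 hind P0 hW.
have [nu' hnu' [b0 b2 k1]] := pair1 hl0 hl1 hl2 hind P0 hD hW.
have [nu'' hnu'' [c1 c2 k0]] := pair0 hl0 hl1 hl2 hind P0 hD hW.
have e0 : nu' i0 = nu i0 by apply/eqP; rewrite eqn_leq b0 // a0.
have e1 : nu'' i1 = nu i1 by apply/eqP; rewrite eqn_leq c1 // a1.
have e2 : nu'' i2 = nu' i2 by apply/eqP; rewrite eqn_leq c2 // b2.
have cle : (nu' i2 <= nu i2)%N by apply: b2.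
have hh := homE hD hnu; have hh' := homE hD hnu'; have hh'' := homE hD hnu''.
have dv : (n2 %| nu i2 - nu' i2)%N by apply: dvdn_sub; [apply: (hdv i2) | apply: (hdv i2)].
set e := ((nu i2 - nu' i2) %/ n2)%N.
have He : (e * n2 = nu i2 - nu' i2)%N by rewrite divnK.
set mmin := (U_(i0) *+ nu i0 + U_(i1) *+ nu i1 + U_(i2) *+ nu' i2)%MM.
have mm0 : mmin i0 = nu i0 by rewrite /mmin !mnmDE !mulmnE !mnm1E /=; lia.
have mm1 : mmin i1 = nu i1 by rewrite /mmin !mnmDE !mulmnE !mnm1E /=; lia.
have mm2 : mmin i2 = nu' i2 by rewrite /mmin !mnmDE !mulmnE !mnm1E /=; lia.
set H : P := 'X_[mmin] * G ^+ e.
set Kp : P := \sum_(j < 3) kap j *: 'X_[uu j].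
have K0 : kap i0 = (l0 * nu i0 + e * L)%:R * mu + (l1 * nu i1)%:R * (mu + gam).
  rewrite k0 ell0E e1; congr (_%:R * _ + _); move: hh hh'' He; rewrite e1 e2; nia.
have K1 : kap i1 = - ((l0 * nu i0)%:R * (lam + gam) + (l1 * nu i1 + e * L)%:R * lam).
  rewrite k1 ell1E e0; congr (- (_ + _%:R * _)); move: hh hh' He; rewrite e0; nia.
have K2 : kap i2 = (l0 * nu i0)%:R * mu - (l1 * nu i1)%:R * lam by rewrite k2 ell2E.
have WH : W H = Kp * H.
  rewrite /H WM W_X W_Gpow mm0 mm1 /Kp sum3 K0 K1 K2 !Xuu -!mul_mpolyC /B0 /B1 /Gpoly.
  rewrite !rmorphD !rmorphN !rmorphM /= !mpolyC_nat ?natrD ?natrM; ring.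
set c := Pn@_nu.
set Q := Pn - c *: H.
have WQ : W Q = Kp * Q by rewrite /Q WB WZ WH hW mulrBr scalerAr.
have hH : hom D H.
  have -> : D = (wdeg l0 l1 l2 mmin + L * e)%N.
    rewrite wdegE mm0 mm1 mm2 -hh; move: He; nia.
  apply: dhomogM; first by rewrite dhomogX.
  exact: dhomogMn hom_G.
have hQ : hom D Q by apply: dhomogD => //; rewrite dhomogN; apply: dhomogZ.
have nuE : nu = (mmin + uu i2 *+ e)%MM.
  apply/mnmP => k; rewrite mnmDE mulmnE uuE; case: (i3_cases k) => ->; rewrite ?mm0 ?mm1 ?mm2 /= ?mul0n ?addn0 //.
  by rewrite mul1n nn2 mulnC He subnKC.
have Hnu : H@_nu = 1.
  rewrite /H mcoeffXM {1}nuE lem_addr {1}nuE addmC addmK; exact: Gpow_coef.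
have cn0 : c != 0 by rewrite /c -mcoeff_msupp.
case: (eqVneq Q 0) => Q0.
  have : Pn = c *: H by apply/eqP; rewrite -subr_eq0 -/Q Q0.
  move=> PE; move: Pp; rewrite PE mevalZ /H mevalM mevalX rmorphXn /= => /eqP.
  rewrite !mulf_eq0 (negbTE cn0) /= expf_eq0 andbC.
  have -> : G.@[p] = lam + mu + gam.
    rewrite /Gpoly !mevalD !rmorphXn /= !mevalXU pl pm pg //.
  rewrite (negbTE s_neq0) /= orbF; apply/negP; apply/prodf_neq0 => k _; exact: expf_neq0.
have [nuQ hnuQ [q0 q1 kq2]] := pair2 hl0 hl1 hl2 hind Q0 WQ.
have := etrans (esym kq2) k2; rewrite !ell2E => ee.
have [hq1 hq0 _] : [/\ (l1 * nu i1 = l1 * nuQ i1)%N, (l0 * nuQ i0 = l0 * nu i0)%N & 0%N = 0%N].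
  apply: (indep_eq hind); apply/eqP; rewrite -subr_eq0; apply/eqP.
  transitivity ((l0 * nuQ i0)%:R * mu - (l1 * nuQ i1)%:R * lam - ((l0 * nu i0)%:R * mu - (l1 * nu i1)%:R * lam)).
    ring.
  by rewrite ee subrr.
have hhQ := homE hQ hnuQ.
have f0 : nuQ i0 = nu i0 by apply/eqP; rewrite -(eqn_pmul2l hl0) hq0.
have f1 : nuQ i1 = nu i1 by apply/eqP; rewrite -(eqn_pmul2l hl1) hq1.
have f2 : nuQ i2 = nu i2.
  apply/eqP; rewrite -(eqn_pmul2l hl2); apply/eqP; apply: (@addnI (l0 * nu i0 + l1 * nu i1)%N).
  by rewrite hh -hhQ f0 f1.
have : nuQ = nu by apply/mnmP => k; case: (i3_cases k) => ->.
move=> eQ; move: hnuQ; rewrite eQ mcoeff_msupp /Q mcoeffB mcoeffZ Hnu mulr1 /c subrr.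
by rewrite eqxx.
Qed.
End Final2.
Lemma prim_root_exists (C : numClosedFieldType) n : (n > 0)%N -> exists z : C, n.-primitive_root z.
Proof.
move=> n_gt0.
pose p : {poly C} := 'X^n - 1; have [r Dp] := closed_field_poly_normal p.
rewrite (monicP _) ?monicXnsubC // scale1r in Dp.
have rn1: all n.-unity_root r by apply/allP=> z; rewrite -root_prod_XsubC -Dp.
have sz_r: (n < (size r).+1)%N.
  by rewrite -(size_prod_XsubC r id) -Dp size_XnsubC.
have [|z] := hasP (has_prim_root n_gt0 rn1 _ sz_r); last by exists z.
by rewrite -separable_prod_XsubC -Dp separable_Xn_sub_1 // pnatr_eq0 -lt0n.
Qed.

Section Homog.
Variable C : numClosedFieldType.
Variables (l0 l1 l2 : nat) (lam mu gam : C).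
Local Notation P := {mpoly C[3]}.
Local Notation L := (l0 * l1 * l2)%N.
Local Notation n0 := (l1 * l2)%N.
Local Notation n1 := (l0 * l2)%N.
Local Notation uu := (uu l0 l1 l2).
Local Notation G := (Gpoly C l0 l1 l2).
Local Notation B0 := (B0 l0 l1 l2 lam mu gam).
Local Notation B1 := (B1 l0 l1 l2 lam mu gam).
Local Notation W := (W l0 l1 l2 lam mu gam).
Local Notation hom d p := (p \is [in C[3], d.-homog for wdeg l0 l1 l2]).

Lemma hom_Eop i d (p : P) : hom d p -> hom d (Eop i p).
Proof. by move=> /dhomogP h; apply/dhomogP => m /Eop_supp /h. Qed.

Lemma hom_uu j : hom L ('X_[uu j] : P).
Proof. by rewrite dhomogX; apply/eqP; rewrite /= wdegE !uuE; case: (i3_cases j) => ->; rewrite /= ?nn0 ?nn1 ?nn2; ring. Qed.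

Lemma hom_Gp : hom L G.
Proof.
have GE : G = 'X_[uu i0] + 'X_[uu i1] + 'X_[uu i2] by rewrite !Xuu.
by rewrite GE; apply: dhomogD; first apply: dhomogD; apply: hom_uu.
Qed.

Lemma hom_B0 : hom L B0.
Proof.
rewrite /B0 !mul_mpolyC; apply: dhomogD; first by apply: dhomogZ; exact: hom_Gp.
rewrite dhomogN; apply: dhomogZ; rewrite -[n0]/(nn l0 l1 l2 i0) -Xuu; exact: hom_uu.
Qed.
Lemma hom_B1 : hom L B1.
Proof.
rewrite /B1 !mul_mpolyC; apply: dhomogD; first by apply: dhomogZ; exact: hom_Gp.
rewrite dhomogN; apply: dhomogZ; rewrite -[n1]/(nn l0 l1 l2 i1) -Xuu; exact: hom_uu.
Qed.

Lemma hom_W d (p : P) : hom d p -> hom (d + L) (W p).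
Proof.
move=> hp; rewrite /W -!mpolyC_nat !mul_mpolyC addnC.
apply: dhomogD; last rewrite dhomogN -scalerAl; rewrite -?scalerAl; apply: dhomogZ; apply: dhomogM;
  by [exact: hom_B1 | exact: hom_B0 | exact: hom_Eop].
Qed.

Lemma pihomogM d e (p q : P) : hom d p ->
  pihomog (wdeg l0 l1 l2) (e + d) (q * p) = pihomog (wdeg l0 l1 l2) e q * p.
Proof.
move=> hp; elim/mpolyind: q => [|c m q _ _ IH]; first by rewrite mul0r !raddf0 mul0r.
rewrite mulrDl !raddfD /= IH mulrDl; congr (_ + _).
have hm : hom (wdeg l0 l1 l2 m + d) (c *: 'X_[m] * p).
  by apply: dhomogM => //; apply: dhomogZ; rewrite dhomogX.
rewrite !linearZ /= pihomogX -scalerAl.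
case: eqP => [<-|ne]; first by rewrite scalerAl pihomog_dE.
rewrite scaler0 mul0r scalerAl (pihomog_ne0 _ hm) //.
by apply/eqP => /addIn e'; apply: ne.
Qed.

Lemma cofactor_hom d (F K : P) : hom d F -> W F = K * F ->
  W F = pihomog (wdeg l0 l1 l2) L K * F /\ hom L (pihomog (wdeg l0 l1 l2) L K).
Proof.
move=> hF hK; split; last exact: pihomogP.
by rewrite -(pihomogM L K hF) -hK pihomog_dE // addnC; apply: hom_W.
Qed.
End Homog.
Lemma mevalXn (C : fieldType) (v : 'I_3 -> C) i k : (('X_i : {mpoly C[3]}) ^+ k).@[v] = v i ^+ k.
Proof. by rewrite rmorphXn /= mevalXU. Qed.

Section Main.
Variable C : numClosedFieldType.
Variables (l0 l1 l2 : nat) (lam mu gam : C).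
Local Notation P := {mpoly C[3]}.
Local Notation L := (l0 * l1 * l2)%N.
Local Notation n0 := (l1 * l2)%N.
Local Notation n1 := (l0 * l2)%N.
Local Notation n2 := (l0 * l1)%N.
Local Notation nn := (nn l0 l1 l2).
Local Notation uu := (uu l0 l1 l2).
Local Notation G := (Gpoly C l0 l1 l2).
Local Notation B0 := (B0 l0 l1 l2 lam mu gam).
Local Notation B1 := (B1 l0 l1 l2 lam mu gam).
Local Notation B2 := (B2 l0 l1 l2 lam mu gam).
Local Notation W := (W l0 l1 l2 lam mu gam).
Local Notation beta := (beta l0 l1 l2 lam mu gam).
Local Notation hom d p := (p \is [in C[3], d.-homog for wdeg l0 l1 l2]).

Definition pt : 'I_3 -> C := fun i =>
  if val i == 0%N then n0.-root lam else if val i == 1%N then n1.-root mu else n2.-root gam.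

Hypotheses (hl0 : (0 < l0)%N) (hl1 : (0 < l1)%N) (hl2 : (0 < l2)%N).
Hypothesis hind : Zlin_indep3 lam mu gam.

Lemma lam_neq0 : lam != 0.
Proof.
apply/eqP => h; have [] := indep_eq (a:=1) (b:=0) (c:=0) (a':=0) (b':=0) (c':=0) hind => //.
by rewrite h !mulr0 !mul0r.
Qed.
Lemma mu_neq0 : mu != 0.
Proof.
apply/eqP => h; have [] := indep_eq (a:=0) (b:=1) (c:=0) (a':=0) (b':=0) (c':=0) hind => //.
by rewrite h !mulr0 !mul0r.
Qed.
Lemma gam_neq0 : gam != 0.
Proof.
apply/eqP => h; have [] := indep_eq (a:=0) (b:=0) (c:=1) (a':=0) (b':=0) (c':=0) hind => //.
by rewrite h !mulr0 !mul0r.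
Qed.

Lemma pt0 : pt i0 ^+ n0 = lam. Proof. by rewrite /pt /= rootCK // muln_gt0 hl1 hl2. Qed.
Lemma pt1 : pt i1 ^+ n1 = mu. Proof. by rewrite /pt /= rootCK // muln_gt0 hl0 hl2. Qed.
Lemma pt2 : pt i2 ^+ n2 = gam. Proof. by rewrite /pt /= rootCK // muln_gt0 hl0 hl1. Qed.

Lemma pt_neq0 i : pt i != 0.
Proof.
case: (i3_cases i) => ->; rewrite /pt /= rootC_eq0 ?muln_gt0 ?hl0 ?hl1 ?hl2 //.
- exact: lam_neq0.
- exact: mu_neq0.
- exact: gam_neq0.
Qed.

Lemma G_pt : G.@[pt] = lam + mu + gam.
Proof. by rewrite /Gpoly !mevalD !mevalXn pt0 pt1 pt2. Qed.

Lemma singular_pt : singular_at beta pt.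
Proof.
split; first by exists i0; exact: pt_neq0.
move=> i; case: (i3_cases i) => ->.
- rewrite betaE0 !mevalM /B0 mevalB !mevalM !mevalC G_pt mevalXn pt0; ring.
- rewrite betaE1 !mevalM /B1 mevalB !mevalM !mevalC G_pt mevalXn pt1; ring.
- rewrite betaE2 !mevalM /B2 mevalB !mevalM !mevalC G_pt mevalXn pt2; ring.
Qed.

Lemma no_inv (F : P) : curve_eq l0 l1 l2 F -> F.@[pt] = 0 -> ~ invariant_curve beta F.
Proof.
move=> [[d hq] nc] Fp inv.
have F0 : F != 0 by have := nc 0; rewrite mpolyC0.
have hF : hom d F by apply/dhomogP => m hm; exact: hq m hm.
have [K hK] := inv_W F0 hq inv hl1 hl2.
have [hK' hKL] := cofactor_hom hF hK.
have ng i : (0 < nn i)%N := nn_gt0 hl0 hl1 hl2 i.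
have [w0 pw0] := prim_root_exists C (ng i0).
have [w1 pw1] := prim_root_exists C (ng i1).
have [w2 pw2] := prim_root_exists C (ng i2).
have [N0nz [d0 hd0] [K0 [hK0 hK0L]] inv0 [comm0 ev0]] := norm_step (prim_expr_order pw0) (ng i0) F0 hF hK' hKL.
have [N1nz [d1 hd1] [K1 [hK1 hK1L]] inv1 [comm1 ev1]] := norm_step (prim_expr_order pw1) (ng i1) N0nz hd0 hK0 hK0L.
have [N2nz [d2 hd2] [K2 [hK2 hK2L]] inv2 [comm2 ev2]] := norm_step (prim_expr_order pw2) (ng i2) N1nz hd1 hK1 hK1L.
set N2 := \prod_(0 <= j < nn i2) _ in N2nz hd2 hK2 inv2 comm2 ev2.
have invN i : sc (zv i (if val i == 0%N then w0 else if val i == 1%N then w1 else w2)) N2 = N2.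
  case: (i3_cases i) => -> /=.
  - exact: comm2 (comm1 _ inv0).
  - exact: comm2 inv1.
  - exact: inv2.
have pwi i : (nn i).-primitive_root (if val i == 0%N then w0 else if val i == 1%N then w1 else w2).
  by case: (i3_cases i) => ->.
have invK i : sc (zv i (if val i == 0%N then w0 else if val i == 1%N then w1 else w2)) K2 = K2.
  have hz := zv_pow (prim_expr_order (pwi i)).
  apply: (mulIf N2nz); rewrite -{1}(invN i) -scM -hK2 scW // invN //.
have dN i m : m \in msupp N2 -> (nn i %| m i)%N by move=> hm; exact: (inv_dvd (pwi i) (invN i) hm).
have dK i m : m \in msupp K2 -> (nn i %| m i)%N by move=> hm; exact: (inv_dvd (pwi i) (invK i) hm).
have KS := K_struct hl0 hl1 hl2 hK2L dK.
rewrite KS in hK2.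
apply: (final_contra hl0 hl1 hl2 hind N2nz hd2 hK2 dN pt_neq0 pt0 pt1 pt2).
exact: ev2 _ (ev1 _ (ev0 _ Fp)).
Qed.
End Main.

Local Open Scope complex_scope.

Theorem proposition4p4 (R : realType) (l0 l1 l2 : nat) (lam mu gam : R[i]) :
  (1 <= l0)%N -> (l0 <= l1)%N -> (l1 <= l2)%N ->
  coprime l0 l1 -> coprime l0 l2 -> coprime l1 l2 ->
  Zlin_indep3 lam mu gam ->
  exists p : 'I_3 -> R[i],
    [/\ singular_at (beta l0 l1 l2 lam mu gam) p,
        p 0 * p 1 * p 2 != 0 &
        forall F : {mpoly R[i][3]}, curve_eq l0 l1 l2 F -> F.@[p] = 0 ->
          ~ invariant_curve (beta l0 l1 l2 lam mu gam) F].
Proof.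
move=> h0 h01 h12 _ _ _ hind.
have hl1 : (0 < l1)%N by apply: leq_trans h01.
have hl2 : (0 < l2)%N by apply: leq_trans h12.
exists (pt l0 l1 l2 lam mu gam); split.
- exact: singular_pt.
- by rewrite !mulf_neq0 // pt_neq0.
- by move=> F; apply: no_inv.
Qed.
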